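(* Let $(C,S)$ be a partially shaded tree, where $C$ is the support tree of a vertex of a non-degenerate transportation polytope $\mathrm{TP}(u,v)$. If some supply node satisfies (SIN) in $(C,S)$, then no demand node is incident in $C$ only to shaded $+$edges. In particular, every well-connected demand node is incident to a shaded $-$edge.
   Context: Let $N_1,N_2\ge1$, $u\in\mathbb{R}_{>0}^{N_1}$, $v\in\mathbb{R}_{>0}^{N_2}$ with $\sum_iu_i=\sum_jv_j$, and $\mathrm{TP}(u,v)=\{y\in\mathbb{R}^{N_1\times N_2}: \sum_j y_{ij}=u_i\ \forall i,\ \sum_i y_{ij}=v_j\ \forall j,\ y\ge 0\}$. View supply nodes $\sigma^1,\dots,\sigma^{N_1}$ and demand nodes $\delta^1,\dots,\delta^{N_2}$ as the two sides of $K_{N_1,N_2}$; the support graph of $y$ consists of the edges $\{\sigma^i,\delta^j\}$ with $y_{ij}>0$. $\mathrm{TP}(u,v)$ is non-degenerate if there are no nonempty proper subsets $I\subsetneq\{1,\dots,N_1\}$, $J\subsetneq\{1,\dots,N_2\}$ with $\sum_{i\in I}u_i=\sum_{j\in J}v_j$; then the support graph of each vertex is a spanning tree of $K_{N_1,N_2}$ determining the vertex; these are called trees. Fix a tree $F$ and a demand node $\delta^*$. Label the edges of $F$: each edge of $F$ lies on a path in $F$ starting at $\delta^*$, and edges along such paths are labeled alternately $+,-,+,\dots$ beginning with $+$ at $\delta^*$ (so each supply node is incident in $F$ to exactly one $+$edge, each demand node other than $\delta^*$ to exactly one $-$edge, and $\delta^*$ only to $+$edges). A partially shaded tree is a pair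 $(C,S)$ with $C$ a tree and $S\subseteq C\cap F$ the shaded edges (others unshaded); shaded edges carry their labels from $F$. A demand node is well-connected if it is not incident to an unshaded edge of $C$. For a supply node $\sigma$, every edge of $C$ lies on a unique path in $C$ starting at $\sigma$; number edges along such paths starting with $1$ at edges incident to $\sigma$, and call an edge odd (w.r.t. $\sigma$) if its number is odd. A supply node $\sigma$ satisfies (SIN) in $(C,S)$ if every edge of $C$ that is odd with respect to $\sigma$ is either unshaded or a shaded $-$edge incident to a well-connected demand node. *)

(* Defs.v *)
From HB Require Import structures.
From mathcomp Require Import all_boot all_order all_algebra.
Set Implicit Arguments. Unset Strict Implicit. Unset Printing Implicit Defensive.
Import Order.TTheory GRing.Theory Num.Theory.
Local Open Scope ring_scope.

Section TP.
Variables (R : realFieldType) (N1 N2 : nat).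

Definition tp_edge := ('I_N1 * 'I_N2)%type.
(* Nodes of K_{N1,N2}: inl i = supply tp_node sigma^i, inr j = demand tp_node delta^j. *)
Definition tp_node := ('I_N1 + 'I_N2)%type.

Definition in_TP (u : 'I_N1 -> R) (v : 'I_N2 -> R) (y : 'M[R]_(N1, N2)) : Prop :=
  (forall i, \sum_(j < N2) y i j = u i) /\
  (forall j, \sum_(i < N1) y i j = v j) /\
  (forall i j, 0 <= y i j).

Definition is_vertex u v (y : 'M[R]_(N1, N2)) : Prop :=
  in_TP u v y /\
  forall y1 y2 (t : R), in_TP u v y1 -> in_TP u v y2 -> 0 < t -> t < 1 ->
    y = t *: y1 + (1 - t) *: y2 -> y1 = y2.

Definition tp_nondegenerate (u : 'I_N1 -> R) (v : 'I_N2 -> R) : Prop :=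
  forall (I : {set 'I_N1}) (J : {set 'I_N2}),
    I != set0 -> I != setT -> J != set0 -> J != setT ->
    \sum_(i in I) u i != \sum_(j in J) v j.

Definition tp_support (y : 'M[R]_(N1, N2)) : {set tp_edge} :=
  [set e : tp_edge | 0 < y e.1 e.2].

Definition is_tree u v (C : {set tp_edge}) : Prop :=
  exists y, is_vertex u v y /\ C = tp_support y.

End TP.

Section Graph.
Variables (N1 N2 : nat).

Definition tp_adj (E : {set tp_edge N1 N2}) : rel (tp_node N1 N2) :=
  fun a b => match a, b with
  | inl i, inr j => (i, j) \in E
  | inr j, inl i => (i, j) \in E
  | _, _ => false
  end.

Definition tp_joins (e : tp_edge N1 N2) (x y : tp_node N1 N2) : bool :=
  ((x == inl e.1) && (y == inr e.2)) || ((x == inr e.2) && (y == inl e.1)).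

(* edge_number E r e k : in the graph E there is a (simple) path
   r = x_0, x_1, ..., x_k starting at r whose last (k-th) tp_edge is e;
   i.e. e gets number k when edges along paths from r are numbered 1,2,... *)
Definition edge_number (E : {set tp_edge N1 N2}) (r : tp_node N1 N2)
    (e : tp_edge N1 N2) (k : nat) : Prop :=
  exists (p : seq (tp_node N1 N2)) (y : tp_node N1 N2),
    [/\ path (tp_adj E) r (rcons p y), uniq (r :: rcons p y),
        tp_joins e (last r p) y & k = (size p).+1].

Definition plus_edge (F : {set tp_edge N1 N2}) (dstar : 'I_N2) (e : tp_edge N1 N2) :=
  exists k, odd k /\ edge_number F (inr dstar) e k.
Definition minus_edge (F : {set tp_edge N1 N2}) (dstar : 'I_N2) (e : tp_edge N1 N2) :=
  exists k, ~~ odd k /\ edge_number F (inr dstar) e k.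

Definition well_connected (C S : {set tp_edge N1 N2}) (d : 'I_N2) : Prop :=
  forall i, (i, d) \in C -> (i, d) \in S.

Definition odd_wrt (C : {set tp_edge N1 N2}) (s : 'I_N1) (e : tp_edge N1 N2) : Prop :=
  exists k, odd k /\ edge_number C (inl s) e k.

Definition SIN (F : {set tp_edge N1 N2}) (dstar : 'I_N2) (C S : {set tp_edge N1 N2})
    (s : 'I_N1) : Prop :=
  forall e, e \in C -> odd_wrt C s e ->
    e \notin S \/
    [/\ e \in S, minus_edge F dstar e & well_connected C S e.2].

End Graph.

(* Main.v *)
Require Import Defs.
From HB Require Import structures.
From mathcomp Require Import all_boot all_order all_algebra.
From mathcomp Require Import ring lra.
Import Order.TTheory GRing.Theory Num.Theory.
Local Open Scope ring_scope.
Set Implicit Arguments. Unset Strict Implicit.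

Section Aux.
Variables (R : realFieldType) (N1 N2 : nat).
Local Notation node := (tp_node N1 N2).

Definition isl (x : node) : bool := if x is inl _ then true else false.

Lemma adj_isl E (a b : node) : tp_adj E a b -> isl b = ~~ isl a.
Proof. by case: a => a; case: b => b. Qed.

Lemma path_parity E (a : node) s :
  path (tp_adj E) a s -> isl (last a s) = isl a (+) odd (size s).
Proof.
elim: s a => [|x s IH] a /=; first by rewrite addbF.
case/andP => hax hp; rewrite IH // (adj_isl hax).
by case: (isl a); case: (odd (size s)).
Qed.

Definition step (a b : node) (i : 'I_N1) (j : 'I_N2) : R :=
  match a, b with
  | inl i', inr j' => ((i == i') && (j == j'))%:R
  | inr j', inl i' => - ((i == i') && (j == j'))%:R
  | _, _ => 0 end.

Fixpoint flow (a : node) (s : seq node) (i : 'I_N1) (j : 'I_N2) : R :=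
  match s with [::] => 0 | x :: s' => step a x i j + flow x s' i j end.

Lemma sum_delta2 (b : bool) (j' : 'I_N2) :
  \sum_(j < N2) (b && (j == j'))%:R = b%:R :> R.
Proof.
case: b; last by rewrite big1.
by rewrite (bigD1 j') //= eqxx big1 ?addr0 // => k /negbTE ->.
Qed.

Lemma sum_delta1 (b : bool) (i' : 'I_N1) :
  \sum_(i < N1) ((i == i') && b)%:R = b%:R :> R.
Proof.
case: b; last by rewrite big1 // => i _; rewrite andbF.
by rewrite (bigD1 i') //= eqxx big1 ?addr0 // => k /negbTE ->.
Qed.

Lemma step_row E a b i : tp_adj E a b ->
  \sum_j step a b i j = (a == inl i)%:R - (b == inl i)%:R.
Proof.
case: a => a; case: b => b //= _.
  by rewrite sum_delta2 subr0 eq_sym.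
rewrite sumrN sum_delta2 sub0r eq_sym //.
Qed.

Lemma step_col E a b j : tp_adj E a b ->
  \sum_i step a b i j = (b == inr j)%:R - (a == inr j)%:R.
Proof.
case: a => a; case: b => b //= _.
  by rewrite sum_delta1 subr0 eq_sym.
by rewrite sumrN sum_delta1 sub0r eq_sym.
Qed.

Lemma flow_row E a s i : path (tp_adj E) a s ->
  \sum_j flow a s i j = (a == inl i)%:R - (last a s == inl i)%:R.
Proof.
elim: s a => [|x s IH] a /=; first by rewrite big1 // subrr.
case/andP => hax hp; rewrite big_split /= (step_row _ hax) IH //.
by rewrite addrA subrK.
Qed.

Lemma flow_col E a s j : path (tp_adj E) a s ->
  \sum_i flow a s i j = (last a s == inr j)%:R - (a == inr j)%:R.
Proof.
elim: s a => [|x s IH] a /=; first by rewrite big1 // subrr.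
case/andP => hax hp; rewrite big_split /= (step_col _ hax) IH //.
by rewrite addrC addrA subrK.
Qed.

Lemma flow_supp E a s i j : path (tp_adj E) a s -> flow a s i j != 0 -> (i, j) \in E.
Proof.
elim: s a => [|x s IH] a /=; first by rewrite eqxx.
case/andP => hax hp hnz.
have [h|h] : step a x i j != 0 \/ flow x s i j != 0.
  by case: (step a x i j =P 0) => [e|/eqP]; [right; rewrite e add0r in hnz|left].
  clear hnz IH hp; move: hax h; case: a => a; case: x => x //=.
    by case: (i =P a) => [->|]; case: (j =P x) => [->|] //= ; rewrite eqxx.
  by case: (i =P x) => [->|]; case: (j =P a) => [->|] //=; rewrite oppr0 eqxx.
exact: (IH x hp h).
Qed.

Lemma flow_noR a s i d : inr d \notin a :: s -> flow a s i d = 0.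
Proof.
elim: s a => [|x s IH] a //=.
rewrite in_cons negb_or => /andP [had]; rewrite in_cons negb_or => /andP [hxd hs].
rewrite IH ?in_cons ?negb_or ?hxd // addr0.
move: had hxd; case: a => a; case: x => x //= h1 h2.
  by have {}h2 : d != x := h2; rewrite (negbTE h2) andbF.
by have {}h1 : d != a := h1; rewrite (negbTE h1) andbF mulr0n oppr0.
Qed.

Lemma flow_noL a s i j : inl i \notin a :: s -> flow a s i j = 0.
Proof.
elim: s a => [|x s IH] a //=.
rewrite in_cons negb_or => /andP [had]; rewrite in_cons negb_or => /andP [hxd hs].
rewrite IH ?in_cons ?negb_or ?hxd // addr0.
move: had hxd; case: a => a; case: x => x //= h1 h2.
  by have {}h1 : i != a := h1; rewrite (negbTE h1).
by have {}h2 : i != x := h2; rewrite (negbTE h2) mulr0n oppr0.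
Qed.

Lemma flow_rcons a s x i j :
  flow a (rcons s x) i j = flow a s i j + step (last a s) x i j.
Proof.
elim: s a => [|y s IH] a /=; first by rewrite !addr0 add0r.
by rewrite IH addrA.
Qed.


Lemma lower_bound (T : finType) (P : pred T) (f : T -> R) :
  (forall x, P x -> 0 < f x) -> exists2 m, 0 < m & forall x, P x -> m <= f x.
Proof.
move=> hP.
suff [m hm H] : exists2 m, 0 < m & forall x, x \in enum T -> P x -> m <= f x.
  by exists m => // x; apply: H; rewrite mem_enum.
elim: (enum T) => [|x s [m hm IH]]; first by exists 1.
case hx: (P x); last first.
  exists m => // y; rewrite in_cons => /orP [/eqP ->|]; [by rewrite hx | exact: IH].
have fx := hP x hx.
case: (ltrP (f x) m) => hlt.
  exists (f x) => // y; rewrite in_cons => /orP [/eqP -> //|ys Py].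
  by apply: le_trans (IH y ys Py); apply: ltW.
exists m => // y; rewrite in_cons => /orP [/eqP -> //|ys Py]; exact: IH.
Qed.

Lemma upper_bound (T : finType) (f : T -> R) :
  exists2 B, 0 <= B & forall x, f x <= B.
Proof.
suff [m hm H] : exists2 m, 0 <= m & forall x, x \in enum T -> f x <= m.
  by exists m => // x; apply: H; rewrite mem_enum.
elim: (enum T) => [|x s [m hm IH]]; first by exists 0.
case: (ltrP (f x) m) => hlt.
  exists m => // y; rewrite in_cons => /orP [/eqP ->|ys]; [exact: ltW | exact: IH].
exists (f x); first exact: le_trans hlt.
move=> y; rewrite in_cons => /orP [/eqP -> //|ys]; exact: le_trans (IH y ys) hlt.
Qed.

Lemma vertex_nocycle (u : 'I_N1 -> R) (v : 'I_N2 -> R) (y : 'M[R]_(N1,N2))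
  (z : 'I_N1 -> 'I_N2 -> R) i0 j0 :
  is_vertex u v y -> (forall i, \sum_j z i j = 0) -> (forall j, \sum_i z i j = 0) ->
  (forall i j, z i j != 0 -> 0 < y i j) -> z i0 j0 != 0 -> False.
Proof.
move=> [[hr [hc hp]] hext] zr zc zs hz0.
have [m hm Hm] := @lower_bound _ (fun e : ('I_N1 * 'I_N2)%type => 0 < y e.1 e.2)
   (fun e => y e.1 e.2) (fun e h => h).
have [B hB HB] := @upper_bound _ (fun e : ('I_N1 * 'I_N2)%type => `|z e.1 e.2|).
pose eps := m / (B + 1).
have hB1 : 0 < B + 1 by lra.
have heps : 0 < eps by rewrite /eps divr_gt0.
have hepsB : eps * (B + 1) = m by rewrite /eps divfK // gt_eqF.
have key : forall i j, `|eps * z i j| <= y i j.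
  move=> i j; case: (z i j =P 0) => [->|/eqP nz]; first by rewrite mulr0 normr0.
  have h1 := Hm (i, j) (zs i j nz); have h2 := HB (i, j); simpl in h1, h2.
  rewrite normrM (gtr0_norm heps).
  have h3 := normr_ge0 (z i j).
  nra.
pose y1 := \matrix_(i, j) (y i j + eps * z i j).
pose y2 := \matrix_(i, j) (y i j - eps * z i j).
have T1 : in_TP u v y1.
  split; [move=> i|split; [move=> j|move=> i j]]; rewrite /y1.
  - under eq_bigr do rewrite mxE.
    by rewrite big_split /= -mulr_sumr zr mulr0 addr0 hr.
  - under eq_bigr do rewrite mxE.
    by rewrite big_split /= -mulr_sumr zc mulr0 addr0 hc.
  - rewrite mxE; have := key i j; rewrite ler_norml => /andP [a b]; lra.
have T2 : in_TP u v y2.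
  split; [move=> i|split; [move=> j|move=> i j]]; rewrite /y2.
  - under eq_bigr do rewrite mxE.
    by rewrite big_split /= sumrN -mulr_sumr zr mulr0 subr0 hr.
  - under eq_bigr do rewrite mxE.
    by rewrite big_split /= sumrN -mulr_sumr zc mulr0 subr0 hc.
  - rewrite mxE; have := key i j; rewrite ler_norml => /andP [a b]; lra.
have E : y1 = y2.
  apply: (hext y1 y2 (1/2)) => //; [lra|lra|].
  by apply/matrixP => i j; rewrite /y1 /y2 !mxE; field.
have := congr1 (fun M : 'M[R]_(N1,N2) => M i0 j0) E; rewrite /y1 /y2 !mxE => h.
have : eps * z i0 j0 = 0 by lra.
by move/eqP; rewrite mulf_eq0 (negbTE hz0) orbF gt_eqF.
Qed.

End Aux.


Section Main.
Variables (R : realFieldType) (N1 N2 : nat).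
Local Notation node := (tp_node N1 N2).

Lemma pm_excl (u : 'I_N1 -> R) (v : 'I_N2 -> R) F dstar i d :
  is_tree u v F -> plus_edge F dstar (i, d) -> minus_edge F dstar (i, d) -> False.
Proof.
move=> [y [hy EF]] [k [ok [p [x [hp up hj ek]]]]] [k' [ek' [q [x' [hq uq hj' ek'']]]]].
have hpar := path_parity hp; rewrite last_rcons size_rcons -ek ok /= in hpar.
have hpar' := path_parity hq; rewrite last_rcons size_rcons -ek'' (negbTE ek') /= in hpar'.
move: hj; rewrite /tp_joins /=; case/orP => /andP [/eqP Lp /eqP hx].
  by rewrite hx in hpar.
move: hj'; rewrite /tp_joins /=; case/orP => /andP [/eqP Lq /eqP hx']; last first.
  by rewrite hx' in hpar'.
subst x x'.
have hq' : path (tp_adj F) (inr dstar) q by move: hq; rewrite rcons_path => /andP [].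
pose z := fun a b => flow R (inr dstar) (rcons p (inl i)) a b - flow R (inr dstar) q a b.
apply: (@vertex_nocycle R N1 N2 u v y z i d) => //.
- move=> a; rewrite /z sumrB (flow_row R a hp) (flow_row R a hq') last_rcons Lq.
  by rewrite subrr.
- move=> b; rewrite /z sumrB (flow_col R b hp) (flow_col R b hq') last_rcons Lq.
  by rewrite subrr.
- move=> a b; rewrite /z => nz.
  have : (a, b) \in F.
    case: (flow R (inr dstar) q a b =P 0) => [e|/eqP h]; last exact: flow_supp hq' h.
    rewrite e subr0 in nz; exact: flow_supp hp nz.
  by rewrite EF inE.
- move: up; rewrite -rcons_cons rcons_uniq => /andP [ni _].
  move: uq; rewrite -rcons_cons rcons_uniq => /andP [nd _].
  rewrite /z flow_rcons Lp (flow_noL R d ni) (flow_noR R i nd) /= !eqxx /=.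
  rewrite add0r subr0 oppr_eq0; exact: oner_neq0.
Qed.


Lemma tree_conn (u : 'I_N1 -> R) (v : 'I_N2 -> R) C s d :
  (forall i, 0 < u i) -> (forall j, 0 < v j) ->
  \sum_(i < N1) u i = \sum_(j < N2) v j -> tp_nondegenerate u v ->
  is_tree u v C -> connect (tp_adj C) (inl s) (inr d).
Proof.
move=> hu hv hsum hnd [y [[[hr [hc hp]] _] EC]].
pose I := [set i | connect (tp_adj C) (inl s) (inl i)].
pose J := [set j | connect (tp_adj C) (inl s) (inr j)].
have adjC i j : 0 < y i j -> tp_adj C (inl i) (inr j) by rewrite /= EC inE.
have adjC' i j : 0 < y i j -> tp_adj C (inr j) (inl i) by rewrite /= EC inE.
have zIJ i j : i \in I -> j \notin J -> y i j = 0.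
  rewrite !inE => hi hj; apply/eqP; rewrite eq_le (hp i j) andbT leNgt.
  apply/negP => pos; apply: (negP hj); exact: connect_trans hi (connect1 (adjC _ _ pos)).
have zJI i j : j \in J -> i \notin I -> y i j = 0.
  rewrite !inE => hj hi; apply/eqP; rewrite eq_le (hp i j) andbT leNgt.
  apply/negP => pos; apply: (negP hi); exact: connect_trans hj (connect1 (adjC' _ _ pos)).
have eqs : \sum_(i in I) u i = \sum_(j in J) v j.
  transitivity (\sum_(i in I) \sum_(j in J) y i j).
    apply: eq_bigr => i hi; rewrite -hr [LHS](bigID (mem J)) /= [X in _ + X]big1 ?addr0 //.
    by move=> j hj; exact: zIJ.
  rewrite exchange_big; apply: eq_bigr => j hj.
  rewrite -hc [RHS](bigID (mem I)) /= [X in _ + X]big1 ?addr0 //.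
  by move=> i hi; exact: zJI.
case hd: (connect _ _ _) => //; exfalso.
have dJ : d \notin J by rewrite inE hd.
have Jlt : \sum_(j in J) v j < \sum_j v j.
  rewrite [X in _ < X](bigID (mem J)) /= [X in _ < _ + X](bigD1 d) //=.
  have : 0 <= \sum_(j | j \notin J) v j by apply: sumr_ge0 => j _; exact: ltW.
  have : 0 <= \sum_(j | (j \notin J) && (j != d)) v j by apply: sumr_ge0 => j _; exact: ltW.
  have := hv d; lra.
have I0 : I != set0 by apply/set0Pn; exists s; rewrite inE connect0.
have IT : I != setT.
  apply/negP => /eqP IT.
  have : \sum_(i in I) u i = \sum_i u i by apply: eq_bigl => i; rewrite IT inE.
  lra.
have J0 : J != set0.
  apply/negP => /eqP J0; rewrite J0 big_set0 in eqs.
  have sI : s \in I by rewrite inE connect0.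
  move: eqs; rewrite (bigD1 s) //=.
  have : 0 <= \sum_(i | (i \in I) && (i != s)) u i by apply: sumr_ge0 => i _; exact: ltW.
  have := hu s; lra.
have JT : J != setT by apply/negP => /eqP JT; move: dJ; rewrite JT inE.
by move/eqP: eqs; apply/negP; apply: hnd.
Qed.

End Main.

Unset Implicit Arguments.

Theorem lemma3 (R : realFieldType) (N1 N2 : nat)
  (u : 'I_N1 -> R) (v : 'I_N2 -> R)
  (hN1 : (1 <= N1)%N) (hN2 : (1 <= N2)%N)
  (hu : forall i, 0 < u i) (hv : forall j, 0 < v j)
  (hsum : \sum_(i < N1) u i = \sum_(j < N2) v j)
  (hnd : tp_nondegenerate u v)
  (F : {set tp_edge N1 N2}) (hF : is_tree u v F) (dstar : 'I_N2)
  (C S : {set tp_edge N1 N2}) (hC : is_tree u v C) (hS : S \subset C :&: F) :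
  (exists s : 'I_N1, SIN F dstar C S s) ->
  ~ (exists d : 'I_N2, forall i : 'I_N1,
        (i, d) \in C -> (i, d) \in S /\ plus_edge F dstar (i, d)) /\
  (forall d : 'I_N2, well_connected C S d ->
     exists i : 'I_N1, (i, d) \in S /\ minus_edge F dstar (i, d)).
Proof.
move=> [s hs].
have key : forall d, exists i, (i, d) \in C /\ odd_wrt C s (i, d).
  move=> d; have := tree_conn s d hu hv hsum hnd hC.
  case/connectP => p hp Ld; move: Ld.
  case/shortenP: hp => p' hp' up' _ Ld.
  move: hp' up' Ld; case/lastP: p' => [|q x] hp' up' Ld //.
  rewrite last_rcons in Ld; subst x.
  move: (hp'); rewrite rcons_path => /andP [_ ha].
  move: ha; case El: (last (inl s) q) => [i|j] //= ha.
  exists i; split; first exact: ha.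
  exists (size q).+1; split.
    have := path_parity hp'; rewrite last_rcons size_rcons /=.
    by rewrite /=; case: (odd (size q)).
  by exists q, (inr d); split => //; rewrite /tp_joins El /= !eqxx.
split.
- case=> d H; have [i [hi ho]] := key d; have [hSi hplus] := H i hi.
  case: (hs _ hi ho) => [|[_ hm _]]; first by rewrite hSi.
  exact: pm_excl hF hplus hm.
- move=> d wc; have [i [hi ho]] := key d; exists i.
  case: (hs _ hi ho) => [hn|[hSi hm _]]; last by split.
  by rewrite (wc i hi) in hn.
Qed.
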